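(* For all $N\ge2$ and $n\ge0$, as Laurent polynomials, $$h_n\Big(\frac1{x_1},\ldots,\frac1{x_N}\Big)\,h_n(x_1,\ldots,x_N)=\frac{(N)_n}{n!}\,\sigma_n^{N-1}(x).$$
   Context: $(t)_m=\prod_{i=1}^m(t+i-1)$ is the Pochhammer symbol. $h_n(x)=\sum\{x^\alpha:\alpha\in\mathbb{N}_0^N,\ \sum_i\alpha_i=n\}$ is the complete symmetric polynomial. $\boldsymbol{Z}_{N,k}=\{\alpha\in\mathbb{Z}^N:\sum_i\alpha_i=0,\ \sum_i|\alpha_i|=2k\}$, $S_k(x)=\sum_{\alpha\in\boldsymbol{Z}_{N,k}}x^\alpha$, and for $\delta>0$ the Cesàro kernel is $\sigma_n^\delta(x)=\sum_{k=0}^n\frac{(-n)_k}{(-n-\delta)_k}S_k(x)$. *)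

(* Defs.v *)
(* Laurent polynomials in N variables over rat, encoded as
   finite formal sums (lists of coefficient/exponent pairs); two Laurent
   polynomials are equal iff all their coefficients agree. *)
From HB Require Import structures.
From mathcomp Require Import all_boot all_order all_algebra.
Set Implicit Arguments. Unset Strict Implicit. Unset Printing Implicit Defensive.
Import Order.TTheory GRing.Theory Num.Theory.
Local Open Scope ring_scope.

Definition expo (N : nat) := {ffun 'I_N -> int}.

Definition laurent (N : nat) := seq (rat * expo N).

Definition lcoef N (p : laurent N) (a : expo N) : rat :=
  \sum_(t <- p | t.2 == a) t.1.

Definition leq_laurent N (p q : laurent N) : Prop :=
  forall a : expo N, lcoef p a = lcoef q a.

Definition lmul N (p q : laurent N) : laurent N :=
  [seq (t.1 * u.1, [ffun i => t.2 i + u.2 i] : expo N) | t : rat * expo N <- p, u : rat * expo N <- q].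

Definition lscale N (c : rat) (p : laurent N) : laurent N :=
  [seq (c * t.1, t.2) | t : rat * expo N <- p].

Definition linv N (p : laurent N) : laurent N :=
  [seq (t.1, [ffun i => - t.2 i] : expo N) | t : rat * expo N <- p].

Definition poch (t : rat) (m : nat) : rat := \prod_(i < m) (t + i%:R).

(* complete symmetric polynomial h_n(x) = sum_{alpha in N_0^N, |alpha| = n} x^alpha
   (each alpha_i <= n, so enumerate over {ffun 'I_N -> 'I_n.+1}) *)
Definition hpoly (N n : nat) : laurent N :=
  [seq ((1 : rat), [ffun i => ((f i : nat)%:Z)] : expo N) |
     f : {ffun 'I_N -> 'I_n.+1} <- enum {ffun 'I_N -> 'I_n.+1} & (\sum_(i < N) (f i : nat))%N == n].

Definition inZNk N (k : nat) (a : expo N) : bool :=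
  (\sum_(i < N) a i == 0) && ((\sum_(i < N) `|a i|)%N == (2 * k)%N).

(* S_k(x) = sum_{alpha in Z_{N,k}} x^alpha.  Every alpha in Z_{N,k} has
   |alpha_i| <= 2k, so we enumerate alpha_i = j - 2k with j in 'I_(4k).+1
   (an injective parametrisation). *)
Definition shift N (k : nat) (f : {ffun 'I_N -> 'I_(4 * k).+1}) : expo N :=
  [ffun i => (f i : nat)%:Z - (2 * k)%:Z].

Definition Spoly (N k : nat) : laurent N :=
  [seq ((1 : rat), shift f) | f : {ffun 'I_N -> 'I_(4 * k).+1} <- enum {ffun 'I_N -> 'I_(4 * k).+1} & inZNk k (shift f)].

Definition cesaro (N n : nat) (delta : rat) : laurent N :=
  flatten [seq lscale (poch (- n%:R) k / poch (- n%:R - delta) k) (Spoly N k)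
          | k <- iota 0 n.+1].

(* Main.v *)
Require Import Defs.
From HB Require Import structures.
From mathcomp Require Import all_boot all_order all_algebra.
From mathcomp Require Import zify ring lra.
Import Order.TTheory GRing.Theory Num.Theory.
Local Open Scope ring_scope.

Lemma lcoef_lscale N c (p : laurent N) a : lcoef (lscale c p) a = c * lcoef p a.
Proof. by rewrite /lcoef /lscale big_map /= mulr_sumr. Qed.

Lemma lcoef_flatten N (ps : seq (laurent N)) a :
  lcoef (flatten ps) a = \sum_(p <- ps) lcoef p a.
Proof. by rewrite /lcoef big_flatten. Qed.

Lemma lcoef_lmul N (p q : laurent N) a :
  lcoef (lmul p q) a = \sum_(t <- p) \sum_(u <- q | [ffun i => t.2 i + u.2 i] == a) t.1 * u.1.
Proof.
rewrite /lcoef /lmul big_mkcond big_allpairs_dep /=.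
by apply: eq_bigr => t _; rewrite [RHS]big_mkcond.
Qed.

Lemma lcoef_LHS N n a :
  lcoef (lmul (linv (hpoly N n)) (hpoly N n)) a =
  \sum_(f : {ffun 'I_N -> 'I_n.+1} | (\sum_(i < N) (f i : nat))%N == n)
    \sum_(g : {ffun 'I_N -> 'I_n.+1} | (\sum_(i < N) (g i : nat))%N == n)
      (([ffun i => - ((f i : nat)%:Z) + (g i : nat)%:Z] : expo N) == a)%:R.
Proof.
rewrite lcoef_lmul /linv /hpoly big_map big_map big_filter big_enum_cond /=.
apply: eq_big => [f|f _]; first by [].
idtac.
rewrite big_map big_filter_cond big_enum_cond big_mkcond [RHS]big_mkcond /=.
apply: eq_bigr => g _.
case: (_ == n)%N => //.
have -> : ([ffun i => [ffun i0 => - ([ffun i1 => (f i1 : nat)%:Z] : expo N) i0] i + [ffun i0 => ((g i0 : nat)%:Z)] i] : expo N) =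
   [ffun i => - ((f i : nat)%:Z) + (g i : nat)%:Z].
  by apply/ffunP => i; rewrite !ffunE.
by case: (_ == a); rewrite ?mulr1.
Qed.

Lemma abs_le_sum N (a : expo N) i : (`|a i| <= \sum_(j < N) `|a j|)%N.
Proof. by rewrite (bigD1 i) //= leq_addr. Qed.

Lemma lcoef_Spoly N k (a : expo N) : lcoef (Spoly N k) a = (inZNk k a)%:R.
Proof.
rewrite /lcoef /Spoly big_map big_filter_cond big_enum_cond /=.
case hA: (inZNk k a); last first.
  rewrite big_pred0 // => f /=.
  by case: eqP => [->|]; rewrite ?hA ?andbF.
have hb : forall i, (`|a i| <= 2 * k)%N.
  move=> i; move: hA => /andP[_ /eqP <-]; exact: abs_le_sum.
pose f0 : {ffun 'I_N -> 'I_(4 * k).+1} := [ffun i => inord (absz (a i + (2 * k)%N%:Z))].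
rewrite (eq_bigl (pred1 f0)) ?big_pred1_eq // => f.
rewrite /=; apply/andP/eqP.
  move=> [_ /eqP ha]; apply/ffunP => i; rewrite /f0 -ha ffunE; apply: val_inj => /=.
  rewrite /shift ffunE; have := ltn_ord (f i); move=> hf.
  by rewrite subrK inordK.
move=> ->; suff -> : shift f0 = a by rewrite hA.
apply/ffunP => i; rewrite /shift !ffunE inordK; have := hb i; move: (a i) => x; lia.
Qed.
Lemma term_le_sum N (F : 'I_N -> nat) i : (F i <= \sum_(j < N) F j)%N.
Proof. by rewrite (bigD1 i) //= leq_addr. Qed.

Local Close Scope ring_scope.
Lemma card_shift N n (an : 'I_N -> nat) : \sum_(i < N) an i <= n ->
  \sum_(f : {ffun 'I_N -> 'I_n.+1} | (\sum_(i < N) (f i : nat) == n) && [forall i, an i <= f i]) 1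
  = \sum_(t : N.-tuple 'I_(n - \sum_(i < N) an i).+1 | \sum_(x <- t) (x : nat) == n - \sum_(i < N) an i) 1.
Proof.
set K := \sum_(i < N) an i => hK.
pose h (t : N.-tuple 'I_(n - K).+1) : {ffun 'I_N -> 'I_n.+1} := [ffun i => inord (tnth t i + an i)].
have hanK : forall i, an i <= K by move=> i; exact: term_le_sum.
have hh : forall t i, (h t i : nat) = tnth t i + an i.
  move=> t i; rewrite /h ffunE inordK //; have := ltn_ord (tnth t i); have := hanK i; lia.
pose h' (f : {ffun 'I_N -> 'I_n.+1}) : N.-tuple 'I_(n - K).+1 := [tuple inord (f i - an i) | i < N].
rewrite (reindex h).
  apply: eq_bigl => t.
  have -> : \sum_(i < N) (h t i : nat) = \sum_(x <- t) (x : nat) + K.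
    rewrite big_tuple -big_split /=; apply: eq_bigr => i _; exact: hh.
  have -> : [forall i, an i <= h t i] = true.
    by apply/forallP => i; rewrite hh leq_addl.
  rewrite andbT; apply/idP/idP => /eqP H; apply/eqP; move: H hK; clear; move: (\sum_(x <- t) _) => x; lia.
exists h'.
  move=> t _; apply: eq_from_tnth => i; rewrite tnth_mktuple hh addnK.
  exact: inord_val.
move=> f; rewrite inE => /andP[/eqP hs /forallP hle].
apply/ffunP => i; apply: ord_inj; rewrite hh tnth_mktuple.
have hb : f i - an i <= n - K.
  have hs2 : \sum_(j < N | j != i) an j <= \sum_(j < N | j != i) (f j : nat).
    by apply: leq_sum => j _; exact: hle j.
  have e1 : K = an i + \sum_(j < N | j != i) an j by rewrite /K (bigD1 i).
  have e2 : \sum_(j < N) (f j : nat) = (f i : nat) + \sum_(j < N | j != i) (f j : nat) by rewrite (bigD1 i).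
  have {}hs : \sum_(j < N) (f j : nat) = n :> nat := hs.
  have := hle i; move: hs hs2 e1 e2; clear; lia.
rewrite inordK ?ltnS // subnK //.
Qed.
Local Open Scope ring_scope.

Definition negp (x : int) : nat := if x < 0 then `|x|%N else 0%N.

Lemma sumPosz N (F : 'I_N -> nat) : ((\sum_(i < N) F i)%N)%:Z = \sum_(i < N) (F i)%:Z.
Proof. exact: (big_morph Posz PoszD (erefl _)). Qed.

Lemma inner N n (a : {ffun 'I_N -> int}) (f : {ffun 'I_N -> 'I_n.+1}) :
  (\sum_(i < N) (f i : nat))%N = n -> \sum_(i < N) a i = 0 ->
  \sum_(g : {ffun 'I_N -> 'I_n.+1} | (\sum_(i < N) (g i : nat))%N == n)
      (([ffun i => - ((f i : nat)%:Z) + (g i : nat)%:Z] : {ffun 'I_N -> int}) == a)%:R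
  = ([forall i, negp (a i) <= f i]%N)%:R :> rat.
Proof.
move=> hf ha.
case H: [forall i, negp (a i) <= f i]%N; last first.
  move/negbT: H; rewrite negb_forall => /existsP [i hi].
  rewrite big1 // => g _; case: eqP => //= hg.
  have := congr1 (fun h : {ffun 'I_N -> int} => h i) hg; rewrite ffunE.
  move: hi; rewrite /negp; move: (a i) (nat_of_ord (f i)) (nat_of_ord (g i)) => x y z.
  case: ifP; lia.
have hnn : forall i, 0 <= (f i : nat)%:Z + a i.
  move=> i; have := forallP H i; rewrite /negp.
  move: (a i) (nat_of_ord (f i)) => x y; case: ifP; lia.
have hsum : (\sum_(i < N) (absz ((f i : nat)%:Z + a i)%R))%N = n.
  apply/eqP; rewrite -eqz_nat sumPosz.
  rewrite (eq_bigr (fun i => (f i : nat)%:Z + a i)); last first.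
    by move=> i _; have := hnn i; move: (_ + a i) => x; lia.
  by rewrite big_split /= ha addr0 -sumPosz hf.
have hb : forall i, ((absz ((f i : nat)%:Z + a i)%R) < n.+1)%N.
  by move=> i; have := term_le_sum _ (fun j => (absz ((f j : nat)%:Z + a j)%R)) i; rewrite hsum ltnS.
pose g0 : {ffun 'I_N -> 'I_n.+1} := [ffun i => inord (absz ((f i : nat)%:Z + a i)%R)].
rewrite (eq_bigr (fun g : {ffun 'I_N -> 'I_n.+1} => if ([ffun i => - ((f i : nat)%:Z) + (g i : nat)%:Z] : {ffun 'I_N -> int}) == a then 1 else 0)); last by move=> g _; case: eqP.
rewrite -big_mkcondr (eq_bigl (pred1 g0)) ?big_pred1_eq // => g /=; apply/andP/eqP.
  move=> [_ /eqP hg]; apply/ffunP => i; apply: ord_inj; rewrite ffunE inordK //.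
  have := congr1 (fun h : {ffun 'I_N -> int} => h i) hg; rewrite ffunE => <-.
  by rewrite addrA addrN add0r.
move=> ->; split.
  apply/eqP; rewrite -[RHS]hsum; apply: eq_bigr => i _; by rewrite ffunE inordK.
apply/eqP/ffunP => i; rewrite !ffunE inordK //.
have := hnn i; move: (a i) (nat_of_ord (f i)) => x y; lia.
Qed.
Lemma poch_pos M n : poch (M.+1)%:R n * (M`!)%:R = ((M + n)`!)%:R.
Proof.
elim: n => [|n IH]; first by rewrite /poch big_ord0 mul1r addn0.
rewrite /poch big_ord_recr /= -/(poch _ n) mulrAC IH addnS factS natrM.
by rewrite -natrD addSn mulrC.
Qed.

Lemma poch_neg m k : (k <= m)%N -> poch (- m%:R) k = (-1) ^+ k * (m ^_ k)%:R.
Proof.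
elim: k => [|k IH] hk; first by rewrite /poch big_ord0 expr0 mul1r ffactn0.
rewrite /poch big_ord_recr /= -/(poch _ k) IH ?(ltnW hk) // ffactnSr natrM natrB ?(ltnW hk) //.
rewrite exprS; ring.
Qed.

Lemma fact_neq0 m : (m`!)%:R != 0 :> rat.
Proof. by rewrite pnatr_eq0 -lt0n fact_gt0. Qed.

Lemma coef_identity M n K : (K <= n)%N ->
  poch (M.+1)%:R n / (n`!)%:R * (poch (- n%:R) K / poch (- n%:R - M%:R) K)
  = ('C(M + (n - K), M))%:R.
Proof.
move=> hK.
rewrite -opprD -natrD !poch_neg ?(leq_trans hK (leq_addr _ _)) //.
have e1 := poch_pos M n.
have e2 := ffact_fact hK.
have hK2 : (K <= n + M)%N by apply: leq_trans hK (leq_addr _ _).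
have e3 := ffact_fact hK2.
have e4 := bin_fact (leq_addr (n - K) M).
have eq1 : (n + M - K = M + (n - K))%N by lia.
rewrite eq1 in e3; rewrite addKn in e4.
move/(congr1 (fun x => x%:R : rat)): e2; rewrite natrM => e2.
move/(congr1 (fun x => x%:R : rat)): e3; rewrite natrM => e3.
move/(congr1 (fun x => x%:R : rat)): e4; rewrite !natrM => e4.
have hM := fact_neq0 M; have hn := fact_neq0 n; have hnK := fact_neq0 (n - K).
have hMn := fact_neq0 (M + n); have hMnK := fact_neq0 (M + (n - K)).
have hffn : ((n + M) ^_ K)%:R != 0 :> rat.
  by rewrite pnatr_eq0 -lt0n ffact_gt0.
have p1 : poch (M.+1)%:R n = ((M + n)`!)%:R / (M`!)%:R by rewrite -e1 mulfK.
have p2 : (n ^_ K)%:R = (n`!)%:R / ((n - K)`!)%:R :> rat by rewrite -e2 mulfK.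
have p3 : ((n + M) ^_ K)%:R = ((M + n)`!)%:R / ((M + (n - K))`!)%:R :> rat by rewrite (addnC M n) -e3 mulfK.
have p4 : ('C(M + (n - K), M))%:R = ((M + (n - K))`!)%:R / ((M`!)%:R * ((n - K)`!)%:R) :> rat.
  by rewrite -e4 mulfK // mulf_neq0.
rewrite p4 p1 p2 p3; field.
by rewrite hM hn hnK hMn hMnK /= signr_eq0.
Qed.

Lemma sum_abs_2K N (a : expo N) : \sum_(i < N) a i = 0 ->
  (\sum_(i < N) `|a i|)%N = (2 * \sum_(i < N) negp (a i))%N.
Proof.
move=> ha; apply/eqP; rewrite -eqz_nat sumPosz PoszM sumPosz.
rewrite (eq_bigr (fun i => a i + 2%:Z * (negp (a i))%:Z)); last first.
  by move=> i _; rewrite /negp; move: (a i) => x; case: ifP; lia.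
by rewrite big_split /= ha add0r -mulr_sumr.
Qed.

Lemma inZNk_K N (a : expo N) k : \sum_(i < N) a i = 0 ->
  inZNk k a = (k == \sum_(i < N) negp (a i))%N.
Proof.
move=> ha; rewrite /inZNk ha eqxx /= sum_abs_2K //.
by rewrite eqn_pmul2l // eq_sym.
Qed.

Theorem theorem4p5 (N n : nat) (hN : (2 <= N)%N) :
  leq_laurent (lmul (linv (hpoly N n)) (hpoly N n))
              (lscale (poch N%:R n / (n`!)%:R) (cesaro N n (N.-1)%:R)).
Proof.
case: N hN => [|M] // hM a.
rewrite lcoef_LHS /cesaro lcoef_lscale lcoef_flatten big_map.
under eq_bigr do rewrite lcoef_lscale lcoef_Spoly.
case: (eqVneq (\sum_(i < M.+1) a i) 0) => ha; last first.
  rewrite big1; last first.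
    move=> f /eqP hf; rewrite big1 // => g /eqP hg; case: eqP => // hga.
    move: ha; rewrite -hga; under eq_bigr do rewrite ffunE.
    by rewrite big_split /= sumrN -!sumPosz hf hg addNr eqxx.
  rewrite big1_seq ?mulr0 // => k _.
  by rewrite /inZNk (negbTE ha) mulr0.
rewrite (eq_bigr (fun f : {ffun 'I_M.+1 -> 'I_n.+1} => ((if [forall i, negp (a i) <= f i]%N then 1%N else 0%N) : nat)%:R)); last first.
  by move=> f /eqP hf; rewrite (inner _ _ _ _ hf ha); case: [forall _, _].
set K := (\sum_(i < M.+1) negp (a i))%N.
rewrite [X in _ = _ * X](eq_bigr (fun i => if i == K then poch (- n%:R) i / poch (- n%:R - M%:R) i else 0)); last first.
  by move=> i _; rewrite inZNk_K //; case: eqP; rewrite ?mulr1 ?mulr0.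
rewrite -big_mkcond.
rewrite -[iota 0 n.+1]/(index_iota 0 n.+1) big_nat1_eq /=.
rewrite -natr_sum -big_mkcondr /=.
case: ltnP => hKn; last first.
  rewrite mulr0 big_pred0 // => f; apply/negbTE/negP => /andP[/eqP hf /forallP hle].
  have : (K <= \sum_(i < M.+1) (f i : nat))%N by apply: leq_sum => i _; exact: hle.
  by rewrite hf => H; move: (leq_trans hKn H); rewrite ltnn.
rewrite ltnS in hKn.
rewrite card_shift // -/K sum1dep_card card_ord_partitions.
by rewrite coef_identity.
Qed.
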